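(* Let $V$ be a finite nonempty set and $f:\{0,1\}^V\to\{0,1\}^V$ be non-expansive. (1) Every subnetwork of $f$ has at most one fixed point if and only if $f$ has no positive-circular subnetwork. (2) Every subnetwork of $f$ has at least one fixed point if and only if $f$ has no negative-circular subnetwork.
   Context: $d$ is the Hamming distance on $\{0,1\}^V$; $f$ is non-expansive if $d(f(x),f(y))\le d(x,y)$ for all $x,y$. For nonempty $I\subseteq V$ and $z\in\{0,1\}^{V\setminus I}$, the subnetwork of $f$ induced by $z$ is $h:\{0,1\}^I\to\{0,1\}^I$ with $h(x|_I)=f(x)|_I$ for all $x$ whose restriction to $V\setminus I$ is $z$ ($f$ is a subnetwork of itself). For a network $g$ on $W$ and $x^{j\alpha}$ the point equal to $x$ except its $j$-component is $\alpha$, the global interaction graph $G(g)$ is the signed digraph on $W$ with a positive (resp. negative) arc from $j$ to $i$ iff $g_i(x^{j1})-g_i(x^{j0})=1$ (resp. $=-1$) for at least one $x$. A cycle is a subgraph with at most one arc between any ordered pair of vertices whose underlying unsigned digraph is a directed cycle; positive (negative) if it has an even (odd) number of negative arcs. $g$ is positive-circular (negative-circular) if $G(g)$ itself is a positive (negative) cycle through all vertices of $W$. *)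

(* Defs.v *)
From mathcomp Require Import all_boot.
Set Implicit Arguments. Unset Strict Implicit. Unset Printing Implicit Defensive.

(* Configurations x in {0,1}^W are finite functions W -> bool (true = 1). *)
Definition config (W : finType) := {ffun W -> bool}.
Definition network (W : finType) := config W -> config W.

Definition hamming (W : finType) (x y : config W) : nat :=
  #|[set v | x v != y v]|.

Definition nonexpansive (W : finType) (f : network W) : Prop :=
  forall x y, hamming (f x) (f y) <= hamming x y.

Definition setc (W : finType) (x : config W) (j : W) (b : bool) : config W :=
  [ffun k => if k == j then b else x k].

Definition pos_arc (W : finType) (g : network W) (j i : W) : bool :=
  [exists x : config W, g (setc x j true) i && ~~ g (setc x j false) i].
Definition neg_arc (W : finType) (g : network W) (j i : W) : bool :=
  [exists x : config W, ~~ g (setc x j true) i && g (setc x j false) i].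

(* G(g) itself is a cycle through all vertices of W, with sign given by
   the parity of its number of negative arcs: there is a successor map s
   such that the arcs are exactly j -> s j, there is at most one arc from
   j to s j, every vertex is reachable from every vertex along s (so s is
   a single cyclic permutation of W), and the number of negative arcs has
   parity [negative]. *)
Definition circular (W : finType) (g : network W) (negative : bool) : Prop :=
  exists s : W -> W,
    [/\ forall j i, (pos_arc g j i || neg_arc g j i) = (i == s j),
        forall j, ~~ (pos_arc g j (s j) && neg_arc g j (s j)),
        forall j k, fconnect s j k
      & odd #|[set j | neg_arc g j (s j)]| = negative].

Definition positive_circular (W : finType) (g : network W) := circular g false.
Definition negative_circular (W : finType) (g : network W) := circular g true.

(* Subnetwork induced by z in {0,1}^{V \ I}, as a network on the vertex
   type {v | v \in I}.  [extend xI z] is the point x of {0,1}^V with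
   x|_I = xI and x|_{V \ I} = z. *)
Definition extend (V : finType) (I : {set V})
    (xI : {ffun {v : V | v \in I} -> bool})
    (z : {ffun {v : V | v \notin I} -> bool}) : config V :=
  [ffun v => match @insub _ (fun v => v \in I) _ v with
             | Some i => xI i
             | None => match @insub _ (fun v => v \notin I) _ v with
                       | Some o => z o
                       | None => false
                       end
             end].

Definition subnetwork (V : finType) (f : network V) (I : {set V})
    (z : {ffun {v : V | v \notin I} -> bool})
    : network {v : V | v \in I} :=
  fun xI => [ffun i => f (extend xI z) (val i)].

Definition fixed_points (W : finType) (g : network W) : {set config W} :=
  [set x | g x == x].

(* Main.v *)
Require Import Defs.
From mathcomp Require Import all_boot.
From Stdlib Require Import Classical.
From mathcomp Require Import zify.
Set Implicit Arguments. Unset Strict Implicit. Unset Printing Implicit Defensive.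

Lemma min_set (T : finType) (P : {set T} -> Prop) A :
  P A -> exists B, P B /\ forall C : {set T}, #|C| < #|B| -> ~ P C.
Proof.
move: {2}#|A| (leqnn #|A|) => n; elim: n A => [|n IH] A HA PA.
  exists A; split => // C; by rewrite leqn0 in HA; rewrite (eqP HA).
case: (classic (exists C : {set T}, #|C| < #|A| /\ P C)) => [[C [HC PC]]|H].
  by apply: (IH C) => //; rewrite -ltnS; apply: leq_trans HC HA.
exists A; split => // C HC PC; apply: H; by exists C.
Qed.

Definition agree (V : finType) (J : {set V}) (u w : config V) :=
  forall m, m \notin J -> w m = u m.
Definition Ifix (V : finType) (F : network V) (J : {set V}) (w : config V) :=
  forall j, j \in J -> F w j = w j.
Definition Pk (V : finType) (F : network V) k (J : {set V}) :=
  k \in J /\ exists u v, [/\ agree J u v, Ifix F J u, Ifix F J v & u k != v k].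

Section KL.
Variables (V : finType) (F : network V) (k : V) (J : {set V}) (u v : config V).
Hypotheses (HF : nonexpansive F) (kJ : k \in J) (Huv : agree J u v)
  (fu : Ifix F J u) (fv : Ifix F J v) (ukv : u k != v k)
  (Hmin : forall J' : {set V}, #|J'| < #|J| -> ~ Pk F k J').

Lemma antip a b : agree J u a -> agree J u b -> Ifix F J a -> Ifix F J b ->
  a k != b k -> forall m, m \in J -> a m != b m.
Proof.
move=> Ha Hb fa fb abk m mJ; apply/negP => /eqP abm.
have mk : m != k by apply: contraNneq abk => <-; rewrite abm.
suff : Pk F k (J :\ m) by apply: Hmin; rewrite (cardsD1 m J) mJ.
split; first by rewrite !inE eq_sym mk.
exists a, b; split => //.
- move=> x; rewrite !inE negb_and negbK => /orP [/eqP ->|xJ]; first by [].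
  by rewrite Hb // Ha.
- by move=> j; rewrite !inE => /andP [_ /fa].
- by move=> j; rewrite !inE => /andP [_ /fb].
Qed.

Lemma uv_antip m : m \in J -> v m = ~~ u m.
Proof.
move=> mJ; have := antip (fun _ _ => erefl) Huv fu fv ukv mJ.
by case: (u m); case: (v m).
Qed.

Definition DJ (a b : config V) := #|[set j in J | a j != b j]|.

Lemma ham_agree a b : agree J u a -> agree J u b -> hamming a b = DJ a b.
Proof.
move=> Ha Hb; rewrite /hamming /DJ; apply: eq_card => j; rewrite !inE.
case jJ: (j \in J) => //=; by rewrite Ha ?jJ // Hb ?jJ // eqxx.
Qed.

Lemma DJ_F (w c : config V) : agree J u w -> agree J u c -> Ifix F J c ->
  DJ (F w) c <= DJ w c.
Proof.
move=> Hw Hc fc; rewrite -(ham_agree Hw Hc).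
apply: (leq_trans _ (HF w c)); rewrite /DJ /hamming; apply: subset_leq_card; apply/subsetP => j.
by rewrite !inE => /andP [jJ]; rewrite fc.
Qed.

Lemma DJ_sum a : DJ a u + DJ a v = #|J|.
Proof.
rewrite /DJ -(cardsID [set j | a j != u j] J); congr (_ + _);
  apply: eq_card => j; rewrite !inE;
  case jJ: (j \in J); rewrite ?andbF ?andbT //= ?uv_antip //.
by case: (a j); case: (u j).
Qed.

Lemma DJ_eq w : agree J u w -> DJ (F w) u = DJ w u.
Proof.
move=> Hw.
have h1 := DJ_F Hw (fun _ _ => erefl) fu.
have h2 := DJ_F Hw Huv fv.
have := DJ_sum (F w); have := DJ_sum w.
move: h1 h2; rewrite /DJ; lia.
Qed.


Definition pt (A : {set V}) : config V := [ffun m => (m \in A) (+) u m].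
Definition H (A : {set V}) : {set V} := [set j in J | F (pt A) j != u j].

Lemma pt_agree (A : {set V}) : A \subset J -> agree J u (pt A).
Proof.
move=> AJ m mJ; rewrite ffunE; case mA: (m \in A) => //.
by rewrite (subsetP AJ m mA) in mJ.
Qed.

Lemma DJ_pt (A : {set V}) : A \subset J -> DJ (pt A) u = #|A|.
Proof.
move=> AJ; rewrite /DJ; apply: eq_card => j; rewrite !inE ffunE.
case jA: (j \in A); last by rewrite addFb eqxx andbF.
by rewrite (subsetP AJ j jA); case: (u j).
Qed.

Lemma H_sub (A : {set V}) : H A \subset J.
Proof. by apply/subsetP => j; rewrite inE => /andP []. Qed.

Lemma card_H (A : {set V}) : A \subset J -> #|H A| = #|A|.
Proof. by move=> AJ; rewrite -(DJ_pt AJ) -(DJ_eq (pt_agree AJ)). Qed.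

Lemma H_mono (A B : {set V}) : A \subset B -> B \subset J -> H A \subset H B.
Proof.
move=> AB BJ; have AJ := subset_trans AB BJ.
set X := H A; set Y := H B.
set D := [set j in J | F (pt A) j != F (pt B) j].
have h1 : #|D| <= #|B :\: A|.
  apply: leq_trans (_ : hamming (F (pt A)) (F (pt B)) <= _).
    by apply: subset_leq_card; apply/subsetP => j; rewrite !inE => /andP [].
  apply: leq_trans (HF _ _) _; rewrite /hamming; apply: eq_leq; apply: eq_card => j.
  rewrite !inE !ffunE.
  case jA: (j \in A); case jB: (j \in B) => //=; rewrite ?eqxx ?andbF //.
  - by rewrite (subsetP AB j jA) in jB.
  - by case: (u j).
have h2 : #|Y :\: X| <= #|D|.
  apply: subset_leq_card; apply/subsetP => j; rewrite !inE.
  case/andP => /negP nX /andP [jJ FB]; rewrite jJ /=.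
  have FA : F (pt A) j = u j by apply/eqP; apply: negbNE; apply/negP => h; apply: nX; rewrite jJ.
  by rewrite FA eq_sym.
have h3 := cardsID X Y.
have h4 := cardsID Y X.
have h5 := cardsID A B.
have e1 := card_H AJ; have e2 := card_H BJ.
have e3 : B :&: A = A by apply/setIidPr.
rewrite e3 in h5.
have e4 : X :&: Y = Y :&: X by rewrite setIC.
have : #|X :\: Y| == 0 by move: h1 h2 h3 h4 h5 e1 e2; rewrite /X /Y e4 -/X -/Y; lia.
by rewrite cards_eq0 setD_eq0.
Qed.


Lemma H_fix (A : {set V}) : A \subset J -> H A = A -> A = set0 \/ A = J.
Proof.
move=> AJ HA.
have fA : Ifix F J (pt A).
  move=> j jJ; have := congr1 (fun S : {set V} => j \in S) HA; rewrite /= !inE jJ /= ffunE.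
  by case: (j \in A); case: (u j); case: (F (pt A) j).
have aA := pt_agree AJ.
case kA: (k \in A).
- right; apply/eqP; rewrite eqEsubset AJ /=; apply/subsetP => m mJ.
  have nk : pt A k != u k by rewrite ffunE kA; case: (u k).
  have := antip aA (fun _ _ => erefl) fA fu nk mJ; rewrite !ffunE.
  by case: (m \in A) => //; rewrite addFb eqxx.
- left; apply/eqP; rewrite -subset0; apply/subsetP => m mA.
  have mJ := subsetP AJ m mA.
  have nk : pt A k != v k by rewrite ffunE kA.
  have := antip aA Huv fA fv nk mJ; rewrite !ffunE mA uv_antip //.
  by case: (u m).
Qed.

Definition sig (j : V) : V := if j \in J then odflt j [pick i in H [set j]] else j.

Lemma sig_H j : j \in J -> H [set j] = [set sig j].
Proof.
move=> jJ.
have /cards1P [i Hi] : #|H [set j]| == 1 by rewrite card_H ?sub1set // cards1.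
rewrite /sig jJ Hi; case: pickP => [i' |/(_ i)]; rewrite !inE ?eqxx //.
by move/eqP ->.
Qed.

Lemma sig_J j : j \in J -> sig j \in J.
Proof. by move=> jJ; apply: (subsetP (H_sub [set j])); rewrite sig_H // set11. Qed.

Lemma sig_H_sub (A : {set V}) : A \subset J -> sig @: A \subset H A.
Proof.
move=> AJ; apply/subsetP => _ /imsetP [a aA ->].
have aJ := subsetP AJ a aA.
apply: (subsetP (H_mono (_ : [set a] \subset A) AJ)); first by rewrite sub1set.
by rewrite sig_H // set11.
Qed.


Lemma sig_onto : sig @: J = J.
Proof.
pose P (A : {set V}) := [/\ A \subset J, A != set0 & sig @: A \subset A].
have PJ : P J.
  split => //; first by apply/set0Pn; exists k.
  by apply/subsetP => _ /imsetP [a aJ ->]; apply: sig_J.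
have [A [[AJ A0 sA] Amin]] := min_set PJ.
set A' := sig @: A.
have A'A : A' = A.
  apply/eqP; rewrite eqEcard sA /=.
  case: (leqP #|A| #|A'|) => // lt; exfalso; apply: (Amin A' lt).
  split; first exact: subset_trans sA AJ.
  - case/set0Pn: A0 => a aA; apply/set0Pn; exists (sig a); exact: imset_f.
  - exact: imsetS.
have HAA : H A = A.
  apply/eqP; rewrite eq_sym eqEcard card_H // leqnn andbT.
  by rewrite -{1}A'A sig_H_sub.
case: (H_fix AJ HAA) => EA; first by rewrite EA eqxx in A0.
by rewrite -EA.
Qed.

Lemma sig_inj : {in J &, injective sig}.
Proof. by apply/imset_injP; rewrite sig_onto. Qed.

Lemma H_sig (A : {set V}) : A \subset J -> H A = sig @: A.
Proof.
move=> AJ; apply/eqP; rewrite eq_sym eqEcard sig_H_sub //= card_H //.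
by rewrite card_in_imset //; apply: sub_in2 sig_inj; apply/subsetP.
Qed.

Lemma sig_formula w : agree J u w -> forall j, j \in J ->
  F w (sig j) = w j (+) (u j (+) u (sig j)).
Proof.
move=> Hw j jJ.
set A := [set m in J | w m != u m].
have AJ : A \subset J by apply/subsetP => m; rewrite inE => /andP [].
have wA : w = pt A.
  apply/ffunP => m; rewrite ffunE inE.
  case mJ: (m \in J) => /=; first by case: (w m); case: (u m).
  by rewrite Hw ?mJ.
have := H_sig AJ; move/(congr1 (fun S : {set V} => sig j \in S)).
rewrite /= inE sig_J //= -wA.
have -> : (sig j \in sig @: A) = (j \in A).
  apply/imsetP/idP => [[a aA /sig_inj E]|jA]; last by exists j.
  by rewrite E // (subsetP AJ).
rewrite inE jJ /=.
by case: (w j); case: (u j); case: (u (sig j)); case: (F w (sig j)).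
Qed.

Lemma sig_iter a n : a \in J -> iter n sig a \in J.
Proof. by move=> aJ; elim: n => //= n IH; apply: sig_J. Qed.

Lemma sig_conn a b : a \in J -> b \in J -> fconnect sig a b.
Proof.
move=> aJ bJ.
set O := [set m | fconnect sig a m].
have OJ : O \subset J.
  apply/subsetP => m; rewrite inE => /iter_findex <-; exact: sig_iter.
have sO : sig @: O \subset O.
  apply/subsetP => _ /imsetP [m mO ->]; rewrite inE in mO *.
  rewrite /O inE; exact: (connect_trans mO (fconnect1 sig m)).
have sOO : sig @: O = O.
  apply/eqP; rewrite eqEcard sO /= card_in_imset //.
  by apply: sub_in2 sig_inj; apply/subsetP.
have HO : H O = O by rewrite H_sig.
case: (H_fix OJ HO) => EO.
  by have := in_set0 a; rewrite -EO inE connect0.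
by move: bJ; rewrite -EO inE.
Qed.

End KL.

Lemma KL (V : finType) (F : network V) k (J : {set V}) :
  nonexpansive F -> Pk F k J ->
  (forall J' : {set V}, #|J'| < #|J| -> ~ Pk F k J') ->
  exists (u : config V) (s : V -> V),
    [/\ s @: J = J, {in J &, injective s},
        (forall a b, a \in J -> b \in J -> fconnect s a b) &
        forall w, agree J u w -> forall j, j \in J ->
          F w (s j) = w j (+) (u j (+) u (s j))].
Proof.
move=> HF [kJ [u [v [Huv fu fv ukv]]]] Hmin.
exists u, (sig F J u); split.
- exact: (sig_onto HF kJ Huv fu fv ukv Hmin).
- exact: (sig_inj HF kJ Huv fu fv ukv Hmin).
- exact: (sig_conn HF kJ Huv fu fv ukv Hmin).
- exact: (sig_formula HF kJ Huv fu fv ukv Hmin).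
Qed.
Lemma cardE_sum (T : finType) (J : {set T}) (P : pred T) :
  #|[set j in J | P j]| = \sum_(j in J) (P j : nat).
Proof.
rewrite -sum1_card big_mkcond /= [RHS]big_mkcond /=.
apply: eq_bigr => j _; rewrite !inE; by case: (j \in J); case: (P j).
Qed.

Lemma odd_card_xor (T : finType) (J : {set T}) (a b : pred T) :
  odd #|[set j in J | a j (+) b j]| =
  odd #|[set j in J | a j]| (+) odd #|[set j in J | b j]|.
Proof.
rewrite !cardE_sum.
have E : \sum_(j in J) ((a j (+) b j) : nat) + (\sum_(j in J) (a j && b j : nat)).*2
   = \sum_(j in J) (a j : nat) + \sum_(j in J) (b j : nat).
  rewrite -big_split /= -!muln2 big_distrl /= -big_split /=.
  by apply: eq_bigr => j _; case: (a j) => /=; case: (b j).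
by rewrite -oddD -E oddD odd_double addbF.
Qed.

Lemma odd_card_perm (T : finType) (J : {set T}) (s : T -> T) (a : T -> bool) :
  s @: J = J -> {in J &, injective s} ->
  odd #|[set j in J | a j != a (s j)]| = false.
Proof.
move=> sJ sinj.
have -> : [set j in J | a j != a (s j)] = [set j in J | a j (+) a (s j)].
  by apply/setP => j; rewrite !inE; case: (j \in J); case: (a j); case: (a (s j)).
rewrite (odd_card_xor J a (fun j => a (s j))) !cardE_sum.
rewrite -(big_imset (fun j => (a j : nat)) sinj) /= sJ.
by rewrite addbb.
Qed.
Lemma setc_id (W : finType) (x : config W) m : setc x m (x m) = x.
Proof. by apply/ffunP => v; rewrite ffunE; case: eqP => // ->. Qed.

Lemma setc_at (W : finType) (x : config W) m b v :
  setc x m b v = if v == m then b else x v.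
Proof. by rewrite ffunE. Qed.

Lemma arc_witness (W : finType) (g : network W) x m i :
  g (setc x m true) i != g (setc x m false) i -> pos_arc g m i || neg_arc g m i.
Proof.
move=> H; apply/orP.
case E1: (g (setc x m true) i); case E2: (g (setc x m false) i); rewrite E1 E2 in H => //.
- by left; apply/existsP; exists x; rewrite E1 E2.
- by right; apply/existsP; exists x; rewrite E1 E2.
Qed.

Lemma dep1 (W : finType) (g : network W) i j :
  (forall m, m != j -> ~~ (pos_arc g m i || neg_arc g m i)) ->
  forall x y : config W, x j = y j -> g x i = g y i.
Proof.
move=> Hno.
suff H : forall n (x y : config W), #|[set m | x m != y m]| <= n -> x j = y j -> g x i = g y i.
  by move=> x y; apply: (H _ x y (leqnn _)).
elim=> [|n IH] x y.
  rewrite leqn0 cards_eq0 => /eqP E _.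
  suff -> : x = y by [].
  apply/ffunP => m; apply/eqP; apply: negbNE; apply/negP => Hm.
  by have := in_set0 m; rewrite -E inE Hm.
move=> Hc Hj.
case: (pickP [pred m | x m != y m]) => [m /= Hm|H0]; last first.
  suff -> : x = y by [].
  by apply/ffunP => m; apply/eqP; have := H0 m; rewrite /= => /negbFE.
have mj : m != j by apply: contraNneq Hm => ->; rewrite Hj.
set x' := setc x m (y m).
have Ex' : g x' i = g y i.
  apply: IH; last by rewrite /x' setc_at eq_sym (negbTE mj).
  have sub : [set v | x' v != y v] \subset [set v | x v != y v] :\ m.
    apply/subsetP => v; rewrite !inE /x' setc_at; case: (v =P m) => [->|_] //=.
    by rewrite eqxx.
  apply: leq_trans (subset_leq_card sub) _.
  move: Hc; rewrite (cardsD1 m) inE Hm /= add1n ltnS; exact.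
rewrite -Ex'.
apply/eqP; apply: negbNE; apply/negP => Hne.
apply: (negP (Hno m mj)); apply: (@arc_witness _ g x m i).
have ym : x m = ~~ y m by move: Hm; case: (x m); case: (y m).
rewrite /x' in Hne.
move: Hne; rewrite -{1}(setc_id x m) ym.
by case: (y m) => //= H; rewrite eq_sym.
Qed.

Lemma fcon_surj (W : finType) (s : W -> W) :
  (forall j k, fconnect s j k) -> injective s.
Proof.
move=> Hcon.
have surj : forall k, exists j, s j = k.
  move=> k; have := iter_findex (Hcon (s k) k).
  case: (findex s (s k) k) => [|n] /= E; first by exists k.
  by exists (iter n s (s k)); rewrite -iterS.
have sT : s @: [set: W] = [set: W].
  apply/setP => k; rewrite inE; case: (surj k) => j <-; by rewrite imset_f ?inE.
have H : {in [set: W] &, injective s} by apply/imset_injP; rewrite sT.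
by move=> x y e; apply: H; rewrite ?inE.
Qed.

Lemma circ_struct (W : finType) (g : network W) b :
  circular g b -> exists s (c : W -> bool),
    [/\ injective s, forall j k, fconnect s j k,
        forall x j, g x (s j) = x j (+) c j & odd #|[set j | c j]| = b].
Proof.
case=> s [Harc Hsgn Hcon Hodd].
have sinj := fcon_surj Hcon.
exists s, (fun j => neg_arc g j (s j)); split => // x j.
have Hdep : forall y z : config W, y j = z j -> g y (s j) = g z (s j).
  apply: dep1 => m mj; rewrite Harc; apply/negP => /eqP /sinj E.
  by rewrite E eqxx in mj.
have := Harc j (s j); rewrite eqxx; have := Hsgn j.
case Hp: (pos_arc g j (s j)); case Hn: (neg_arc g j (s j)) => //= _ _.
- move: Hp => /existsP [w /andP [w1 w0]].
  rewrite (Hdep x (setc w j (x j))); last by rewrite setc_at eqxx.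
  by case: (x j) => /=; [rewrite w1 | apply/negbTE].
- move: Hn => /existsP [w /andP [w1 w0]].
  rewrite (Hdep x (setc w j (x j))); last by rewrite setc_at eqxx.
  by case: (x j) => /=; [apply/negbTE | rewrite w0].
Qed.

Lemma imsetT_inj (W : finType) (s : W -> W) : injective s -> s @: [set: W] = [set: W].
Proof. by move=> si; apply/eqP; rewrite eqEcard subsetT /= card_imset. Qed.

Lemma sum_traject (W : finType) (s : W -> W) r n (F : W -> nat) :
  \sum_(w <- traject s r n) F w = \sum_(m < n) F (iter m s r).
Proof.
elim: n => [|n IH]; first by rewrite big_nil big_ord0.
by rewrite trajectSr -cats1 big_cat big_seq1 /= IH big_ord_recr.
Qed.

Lemma circ_neg_nofp (W : finType) (g : network W) :
  circular g true -> #|fixed_points g| = 0.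
Proof.
move=> /circ_struct [s [c [sinj Hcon Hg Hodd]]].
apply/eqP; rewrite cards_eq0; apply/eqP/setP => x; rewrite !inE.
apply/negP => /eqP Hx.
have Hc : forall j, c j = (x j != x (s j)).
  by move=> j; rewrite -{2}Hx Hg; case: (c j); case: (x j).
have : [set j | c j] = [set j in [set: W] | x j != x (s j)].
  by apply/setP => j; rewrite !inE Hc.
move=> E; move: Hodd; rewrite E odd_card_perm //; first exact: imsetT_inj.
by move=> a b _ _; apply: sinj.
Qed.

Lemma circ_pos_fp (W : finType) (g : network W) :
  0 < #|W| -> circular g false -> 1 < #|fixed_points g|.
Proof.
move=> /card_gt0P [r _] /circ_struct [s [c [sinj Hcon Hg Hodd]]].
pose x : config W := [ffun v => odd (\sum_(m < findex s r v) c (iter m s r))].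
have Hx : forall v, x (s v) = x v (+) c v.
  move=> v; rewrite !ffunE.
  have Hv := findex_max (Hcon r v).
  have Hiv := iter_findex (Hcon r v).
  set n := findex s r v in Hv Hiv *.
  move: Hv; rewrite leq_eqVlt => /orP [/eqP HN | Hlt].
  - have -> : s v = r by rewrite -Hiv -iterS HN iter_order.
    rewrite findex0 big_ord0 /=.
    rewrite -Hiv.
    have -> : odd (\sum_(m < n) c (iter m s r)) (+) c (iter n s r) = odd (\sum_(m < n.+1) c (iter m s r))
      by rewrite big_ord_recr /= oddD; case: (c _).
    rewrite HN -(sum_traject s r _ (fun w => (c w : nat))).
    have P : perm_eq (traject s r (order s r)) (enum W).
      apply: uniq_perm; [exact: orbit_uniq | exact: enum_uniq |].
      by move=> w; rewrite mem_enum -fconnect_orbit Hcon.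
    rewrite (perm_big _ P) big_enum /=.
    have E : [set j | c j] = [set j in [set: W] | c j] by apply/setP=> j; rewrite !inE.
    have := Hodd; rewrite E (cardE_sum [set: W] c) => <-.
    by apply: congr1; apply: eq_bigl => j; rewrite inE.
  - have -> : s v = iter n.+1 s r by rewrite iterS Hiv.
    by rewrite findex_iter // big_ord_recr /= oddD Hiv; case: (c v).
pose y : config W := [ffun v => ~~ x v].
have Hfx : g x = x.
  apply/ffunP => v; rewrite -(f_finv sinj v); set w := finv s v.
  by rewrite Hg Hx.
have Hfy : g y = y.
  apply/ffunP => v; rewrite -(f_finv sinj v); set w := finv s v.
  rewrite Hg /y [in RHS]ffunE [in LHS]ffunE Hx.
  by case: (x w); case: (c w).
apply/card_gt1P; exists x, y; rewrite !inE Hfx Hfy !eqxx; split => //.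
apply/negP => /eqP/ffunP /(_ r); rewrite /y [y r]ffunE; by case: (x r).
Qed.
Definition zof (V : finType) (u : config V) (I : {set V}) :
  {ffun {v : V | v \notin I} -> bool} := [ffun o => u (val o)].

Lemma extend_in (V : finType) (I : {set V}) xI z (i : {v : V | v \in I}) :
  extend xI z (val i) = xI i.
Proof.
rewrite ffunE; case: insubP => [i' _ E|]; first by congr (xI _); apply: val_inj.
by rewrite (valP i).
Qed.

Lemma extend_out (V : finType) (I : {set V}) xI z (o : {v : V | v \notin I}) :
  extend xI z (val o) = z o.
Proof.
rewrite ffunE; case: insubP => [i' iI E|_].
  by move: (valP o); rewrite /= iI.
case: insubP => [o' _ E|]; first by congr (z _); apply: val_inj.
by rewrite (valP o).
Qed.

Lemma extend_agree (V : finType) (I : {set V}) xI (u : config V) :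
  agree I u (extend xI (zof u I)).
Proof.
move=> m mI; have := extend_out xI (zof u I) (Sub m mI : {v : V | v \notin I}).
rewrite SubK => ->; by rewrite ffunE SubK.
Qed.

Lemma circ_conv (V : finType) (f : network V) (I : {set V}) (u : config V)
    (s : V -> V) (e : V -> bool) :
  s @: I = I -> {in I &, injective s} ->
  (forall a b, a \in I -> b \in I -> fconnect s a b) ->
  (forall w, agree I u w -> forall j, j \in I -> f w (s j) = w j (+) e j) ->
  circular (subnetwork f (zof u I)) (odd #|[set j in I | e j]|).
Proof.
move=> sI sinj scon Hf.
set h := subnetwork f (zof u I).
have sIn : forall j, j \in I -> s j \in I by move=> j jI; rewrite -sI imset_f.
pose sW (j : {v : V | v \in I}) : {v : V | v \in I} := insubd j (s (val j)).
have valsW : forall j, val (sW j) = s (val j) by move=> j; rewrite insubdK // sIn // (valP j).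
have Hh : forall xI (j : {v : V | v \in I}), h xI (sW j) = xI j (+) e (val j).
  move=> xI j; rewrite /h /subnetwork ffunE valsW Hf ?(valP j) //; last exact: extend_agree.
  by rewrite extend_in.
have sWinj : injective sW.
  move=> a b E; apply: val_inj; apply: sinj; rewrite ?(valP a) ?(valP b) //.
  by rewrite -!valsW E.
have sWsurj : forall i : {v : V | v \in I}, exists j, i = sW j.
  move=> i; have : val i \in s @: I by rewrite sI (valP i).
  move=> /imsetP [a aI E].
  exists (Sub a aI : {v : V | v \in I}); apply: val_inj; by rewrite valsW SubK.
have Hpos : forall j j', pos_arc h j (sW j') = (j' == j) && ~~ e (val j').
  move=> j j'; apply/existsP/idP => [[x]|/andP [/eqP <- He]].
    by rewrite !Hh !setc_at; case: (j' == j) => //; case: (e _); case: (x j').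
  by exists [ffun => false]; rewrite !Hh !setc_at eqxx; case: (e _) He.
have Hneg : forall j j', neg_arc h j (sW j') = (j' == j) && e (val j').
  move=> j j'; apply/existsP/idP => [[x]|/andP [/eqP <- He]].
    by rewrite !Hh !setc_at; case: (j' == j) => //; case: (e _); case: (x j').
  by exists [ffun => false]; rewrite !Hh !setc_at eqxx He.
have itW : forall n (j : {v : V | v \in I}), val (iter n sW j) = iter n s (val j).
  by move=> n j; elim: n => [//|n IH]; rewrite !iterS valsW IH.
exists sW; split.
- move=> j i; case: (sWsurj i) => j' ->; rewrite Hpos Hneg (inj_eq sWinj).
  by case: (j' == j); case: (e _).
- by move=> j; rewrite Hpos Hneg eqxx; case: (e _).
- move=> j k; have := iter_findex (scon _ _ (valP j) (valP k)).
  rewrite -itW => /val_inj <-; exact: fconnect_iter.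
- congr (odd _).
  have -> : [set j : {v : V | v \in I} | neg_arc h j (sW j)] = [set j : {v : V | v \in I} | e (val j)].
    by apply/setP => j; rewrite !inE Hneg eqxx.
  rewrite -(card_imset _ val_inj); apply: eq_card => v; rewrite !inE.
  apply/imsetP/andP => [[j]|[vI ev]]; first by rewrite inE => ej ->; rewrite (valP j).
  by exists (Sub v vI : {v : V | v \in I}); rewrite ?inE SubK.
Qed.

Lemma ext_self (V : finType) (I : {set V}) (z : {ffun {v : V | v \notin I} -> bool}) (w : config V) :
  (forall o : {v : V | v \notin I}, w (val o) = z o) ->
  extend [ffun i : {v : V | v \in I} => w (val i)] z = w.
Proof.
move=> Hz; apply/ffunP => m.
case mI: (m \in I).
  have := extend_in [ffun i : {v : V | v \in I} => w (val i)] z (Sub m mI : {v : V | v \in I}).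
  by rewrite SubK => ->; rewrite ffunE SubK.
have mI' : m \notin I by rewrite mI.
have := extend_out [ffun i : {v : V | v \in I} => w (val i)] z (Sub m mI' : {v : V | v \notin I}).
by rewrite SubK => ->; rewrite -Hz SubK.
Qed.

Lemma fp_Ifix (V : finType) (f : network V) (I : {set V}) (z : {ffun {v : V | v \notin I} -> bool}) x :
  x \in fixed_points (subnetwork f z) -> Ifix f I (extend x z).
Proof.
rewrite inE => /eqP Hx j jI.
have := congr1 (fun y : config {v : V | v \in I} => y (Sub j jI : {v : V | v \in I})) Hx.
by rewrite /= /subnetwork ffunE SubK -(extend_in x z (Sub j jI : {v : V | v \in I})) SubK.
Qed.

Lemma ext_agree2 (V : finType) (I : {set V}) x y (z : {ffun {v : V | v \notin I} -> bool}) :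
  agree I (extend x z) (extend y z).
Proof.
move=> m mI.
have := extend_out x z (Sub m mI : {v : V | v \notin I}).
have := extend_out y z (Sub m mI : {v : V | v \notin I}).
by rewrite !SubK => -> ->.
Qed.

Lemma W_nonempty (V : finType) (I : {set V}) : I != set0 -> 0 < #|{: {v : V | v \in I}}|.
Proof.
case/set0Pn => i iI; apply/card_gt0P; by exists (Sub i iI : {v : V | v \in I}).
Qed.

Lemma part1 (V : finType) (f : network V) :
  nonexpansive f ->
  ~ (exists (I : {set V}) (z : {ffun {v : V | v \notin I} -> bool}),
       I != set0 /\ positive_circular (subnetwork f z)) ->
  forall (I : {set V}) (z : {ffun {v : V | v \notin I} -> bool}),
    I != set0 -> #|fixed_points (subnetwork f z)| <= 1.
Proof.
move=> HF Hno I z _; rewrite leqNgt; apply/negP => /card_gt1P [x [y [xf yf xy]]].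
have [i xyi] : exists i, x i != y i.
  case: (classic (exists i, x i != y i)) => // Hn; exfalso; move/negP: xy; apply.
  apply/eqP/ffunP => i; apply/eqP; apply: negbNE; apply/negP => h; apply: Hn; by exists i.
have PI : Pk f (val i) I.
  split; first exact: (valP i).
  exists (extend x z), (extend y z); split.
  - exact: ext_agree2.
  - exact: fp_Ifix xf.
  - exact: fp_Ifix yf.
  - by rewrite !extend_in.
have [J [PJ Jmin]] := min_set PI.
have [u [s [sJ sinj scon sf]]] := KL HF PJ Jmin.
have C := circ_conv sJ sinj scon sf.
have EC : odd #|[set j in J | u j (+) u (s j)]| = false.
  rewrite -(odd_card_perm u sJ sinj); congr (odd _); apply: eq_card => j; rewrite !inE.
  by case: (u j); case: (u (s j)).
rewrite EC in C.
apply: Hno; exists J, (zof u J); split => //.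
by case: PJ => kJ _; apply/set0Pn; exists (val i).
Qed.

Lemma Q_nonempty (V : finType) (f : network V) (I : {set V}) (c : config V) :
  (forall w, agree I c w -> ~ Ifix f I w) -> I != set0.
Proof.
move=> H; apply/negP => /eqP I0; apply: (H c) => // j; by rewrite I0 inE.
Qed.

Lemma part2 (V : finType) (f : network V) :
  nonexpansive f ->
  ~ (exists (I : {set V}) (z : {ffun {v : V | v \notin I} -> bool}),
       I != set0 /\ negative_circular (subnetwork f z)) ->
  forall (I : {set V}) (z : {ffun {v : V | v \notin I} -> bool}),
    I != set0 -> 1 <= #|fixed_points (subnetwork f z)|.
Proof.
move=> HF Hno I z _; rewrite leqNgt ltnS leqn0; apply/negP => /eqP H0.
pose Q (J : {set V}) := exists c : config V, forall w, agree J c w -> ~ Ifix f J w.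
have QI : Q I.
  exists (extend [ffun => false] z) => w Hw fw.
  have E : extend [ffun i : {v : V | v \in I} => w (val i)] z = w.
    apply: ext_self => o; rewrite Hw ?(valP o) //; exact: extend_out.
  have : [ffun i : {v : V | v \in I} => w (val i)] \in fixed_points (subnetwork f z).
    rewrite inE; apply/eqP/ffunP => i; rewrite /subnetwork !ffunE E fw //; exact: (valP i).
  move=> Hin; suff : 0 < #|fixed_points (subnetwork f z)| by rewrite H0.
  by apply/card_gt0P; eexists; exact: Hin.
have [I1 [[c Hc] I1min]] := min_set QI.
have /set0Pn [k kI] := Q_nonempty Hc.
pose g : network V := fun w => setc (f w) k (~~ f w k).
have Hg : nonexpansive g.
  move=> x y; apply: (leq_trans _ (HF x y)); apply: eq_leq; apply: eq_card => m.
  rewrite !inE /g !setc_at; case: (m =P k) => [->|//].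
  by case: (f x k); case: (f y k).
have wb : forall b, exists w : config V, [/\ w k = b, agree I1 c w & Ifix g I1 w].
  move=> b.
  have : ~ Q (I1 :\ k) by apply: I1min; rewrite (cardsD1 k I1) kI.
  case: (classic (exists w : config V, agree (I1 :\ k) (setc c k b) w /\ Ifix f (I1 :\ k) w)) =>
    [[w [Hw fw]] _|Hn]; last first.
    case; exists (setc c k b) => w Hw fw; apply: Hn; by exists w.
  have wk : w k = b by rewrite Hw ?setc_at ?eqxx // !inE eqxx.
  have Ha : agree I1 c w.
    move=> m mI; rewrite Hw ?setc_at; last by rewrite !inE (negbTE mI) andbF.
    by case: eqP => // mk; rewrite mk kI in mI.
  have nf : f w k != w k.
    apply/negP => /eqP e; apply: (Hc w Ha) => j jI.
    case: (j =P k) => [->//|/eqP jk]; apply: fw; by rewrite !inE jk.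
  exists w; split => // j jI; rewrite /g setc_at; case: (j =P k) => [->|/eqP jk].
    by move: nf; case: (f w k); case: (w k).
  by apply: fw; rewrite !inE jk.
have [w0 [w0k a0 f0]] := wb false.
have [w1 [w1k a1 f1]] := wb true.
have PI : Pk g k I1.
  split => //; exists w0, w1; split => //; last by rewrite w0k w1k.
  by move=> m mI; rewrite a1 // a0.
have [J [PJ Jmin]] := min_set PI.
have [u [s [sJ sinj scon sf]]] := KL Hg PJ Jmin.
case: PJ => kJ _.
pose e j := (u j (+) u (s j)) (+) (s j == k).
have sf' : forall w, agree J u w -> forall j, j \in J -> f w (s j) = w j (+) e j.
  move=> w Hw j jJ; have := sf w Hw j jJ; rewrite /g /e setc_at.
  case: (s j =P k) => [E|ne]; last by rewrite addbF.
  rewrite E => h; rewrite -[f w k]negbK h.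
  by case: (w j); case: (u j); case: (u k).
have C := circ_conv sJ sinj scon sf'.
have EC : odd #|[set j in J | e j]| = true.
  rewrite (odd_card_xor J (fun j => u j (+) u (s j)) (fun j => s j == k)).
  have -> : odd #|[set j in J | u j (+) u (s j)]| = false.
    rewrite -(odd_card_perm u sJ sinj); congr (odd _); apply: eq_card => j; rewrite !inE.
    by case: (u j); case: (u (s j)).
  have : k \in s @: J by rewrite sJ.
  case/imsetP => j0 j0J ek.
  have -> : [set j in J | s j == k] = [set j0].
    apply/setP => j; rewrite !inE ek; apply/andP/eqP => [[jJ /eqP E]|->]; last by rewrite eqxx.
    exact: sinj.
  by rewrite cards1.
rewrite EC in C.
apply: Hno; exists J, (zof u J); split => //.
by apply/set0Pn; exists k.
Qed.

Theorem corollary7 (V : finType) (f : network V) :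
  0 < #|V| -> nonexpansive f ->
  ((forall (I : {set V}) (z : {ffun {v : V | v \notin I} -> bool}),
      I != set0 -> #|fixed_points (subnetwork f z)| <= 1)
   <-> ~ (exists (I : {set V}) (z : {ffun {v : V | v \notin I} -> bool}),
            I != set0 /\ positive_circular (subnetwork f z)))
  /\
  ((forall (I : {set V}) (z : {ffun {v : V | v \notin I} -> bool}),
      I != set0 -> 1 <= #|fixed_points (subnetwork f z)|)
   <-> ~ (exists (I : {set V}) (z : {ffun {v : V | v \notin I} -> bool}),
            I != set0 /\ negative_circular (subnetwork f z))).
Proof.
move=> _ HF; split; split.
- move=> H [I [z [I0 C]]].
  have := circ_pos_fp (W_nonempty I0) C.
  by rewrite ltnNge H.
- exact: part1.
- move=> H [I [z [I0 C]]].
  have := circ_neg_nofp C.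
  by have := H I z I0; case: #|_|.
- exact: part2.
Qed.
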